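(* If $R$ is a von Neumann regular, locally finite dimensional $K$-algebra, then $R$ is locally unit-regular.
   Context: $K$ is a field; algebras are associative, not necessarily unital. A ring $R$ is regular if for each $x\in R$ there is $y$ with $xyx=x$. A $K$-algebra is locally finite dimensional if every finite subset is contained in a finite dimensional subalgebra. A unital ring $S$ is unit-regular if for each $x\in S$ there is a unit $u$ of $S$ with $xux = x$. A $K$-algebra $R$ is locally unit-regular if every finite subset of $R$ is contained in a $K$-subalgebra of $R$ that has its own identity element and is unit-regular. *)

(* Defs.v *)
(* A (possibly non-unital) associative K-algebra R is modelled as
   a K-module V : lmodType K together with a bilinear associative multiplication. *)
From mathcomp Require Import all_boot all_algebra.
Set Implicit Arguments. Unset Strict Implicit. Unset Printing Implicit Defensive.
Import GRing.Theory.
Local Open Scope ring_scope.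

Section Defs.
Variables (K : fieldType) (V : lmodType K) (mul : V -> V -> V).

Definition assoc_algebra_mul : Prop :=
  (forall x y z, mul x (mul y z) = mul (mul x y) z) /\
  (forall (a : K) x y z, mul (a *: x + y) z = a *: mul x z + mul y z) /\
  (forall (a : K) x y z, mul z (a *: x + y) = a *: mul z x + mul z y).

Definition vN_regular : Prop := forall x, exists y, mul (mul x y) x = x.

Definition is_subalgebra (S : V -> Prop) : Prop :=
  S 0 /\ (forall x y, S x -> S y -> S (x + y)) /\
  (forall (a : K) x, S x -> S (a *: x)) /\
  (forall x y, S x -> S y -> S (mul x y)).

Definition finite_dim (S : V -> Prop) : Prop :=
  exists s : seq V, (forall i : 'I_(size s), S s`_i) /\
    forall x, S x -> exists c : 'I_(size s) -> K, x = \sum_(i < size s) c i *: s`_i.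

Definition locally_finite_dim : Prop :=
  forall F : seq V, exists S : V -> Prop,
    is_subalgebra S /\ finite_dim S /\ (forall x, x \in F -> S x).

Definition unital_unit_regular (S : V -> Prop) : Prop :=
  exists e, S e /\ (forall x, S x -> mul e x = x /\ mul x e = x) /\
    forall x, S x -> exists u v, S u /\ S v /\ mul u v = e /\ mul v u = e /\
                              mul (mul x u) x = x.

Definition locally_unit_regular : Prop :=
  forall F : seq V, exists S : V -> Prop,
    is_subalgebra S /\ (forall x, x \in F -> S x) /\ unital_unit_regular S.

End Defs.

(* Main.v *)
Require Import Defs.
From mathcomp Require Import all_boot all_algebra.
From Stdlib Require Import IndefiniteDescription.
Set Implicit Arguments. Unset Strict Implicit. Unset Printing Implicit Defensive.
Import GRing.Theory.
Local Open Scope ring_scope.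

Section LinAlg.
Variables (K : fieldType) (V : lmodType K).

Lemma dep_lemma (W : V -> Prop) (s : seq V)
  (HW : forall x, W x -> exists c : 'I_(size s) -> K, x = \sum_(i < size s) c i *: s`_i)
  (v : 'I_(size s).+1 -> V) : (forall i, W (v i)) ->
  exists r : 'I_(size s).+1 -> K, (exists i, r i != 0) /\ \sum_i r i *: v i = 0.
Proof.
move=> Hv.
pose C i := proj1_sig (constructive_indefinite_description _ (HW _ (Hv i))).
have HC : forall i, v i = \sum_(j < size s) C i j *: s`_j.
  by move=> i; rewrite /C; case: constructive_indefinite_description.
pose A := \matrix_(i < (size s).+1, j < size s) C i j.
have : kermx A != 0.
  rewrite -mxrank_eq0 mxrank_ker -lt0n subn_gt0 ltnS; exact: rank_leq_col.
case: (pickP (fun ij : 'I_(size s).+1 * 'I_(size s).+1 => kermx A ij.1 ij.2 != 0)).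
  move=> [i j] /= Hij _.
  exists (fun k => kermx A i k); split; first by exists j.
  have H0 : row i (kermx A) *m A = 0 by rewrite -row_mul mulmx_ker row0.
  under eq_bigr do rewrite HC scaler_sumr.
  rewrite exchange_big /=.
  apply: big1 => k _.
  under eq_bigr do rewrite scalerA.
  rewrite -scaler_suml.
  move: H0; move: (kermx A) => kA H0.
  have := congr1 (fun M : 'M[K]_(1, size s) => M 0 k) H0; rewrite !mxE.
  under eq_bigr do rewrite !mxE.
  by move=> ->; rewrite scale0r.
move=> H Hne; exfalso; move: Hne; apply/negP; rewrite negbK.
apply/eqP/matrixP => i j; rewrite [X in _ = X]mxE.
by have := H (i, j); move/negbFE/eqP.
Qed.

Variable f : V -> V.
Hypothesis hf : forall (a : K) u v, f (a *: u + v) = a *: f u + f v.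

Lemma f0 : f 0 = 0.
Proof.
have := hf 1 0 0; rewrite !scale1r !addr0 => H.
by apply: (addrI (f 0)); rewrite addr0 -H.
Qed.
Lemma fD u v : f (u + v) = f u + f v.
Proof. by have := hf 1 u v; rewrite !scale1r. Qed.
Lemma fZ a u : f (a *: u) = a *: f u.
Proof. by have := hf a u 0; rewrite !addr0 f0 addr0. Qed.
Lemma fN u : f (- u) = - f u.
Proof. by rewrite -scaleN1r fZ scaleN1r. Qed.
Lemma fB u v : f (u - v) = f u - f v.
Proof. by rewrite fD fN. Qed.
Lemma fsum k (c : nat -> K) (g : nat -> V) :
  f (\sum_(i < k) c i *: g i) = \sum_(i < k) c i *: f (g i).
Proof.
elim: k => [|k IH]; first by rewrite !big_ord0 f0.
by rewrite !big_ord_recr /= fD fZ IH.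
Qed.
Lemma iterB m u v : iter m f (u - v) = iter m f u - iter m f v.
Proof. by elim: m => [|m IH] //=; rewrite IH fB. Qed.

Lemma shiftG n : forall t (r : nat -> K), (exists i, (i < n)%N /\ r i != 0) ->
  \sum_(i < n) r i *: iter i f t = 0 ->
  exists m k (c : nat -> K), iter m f t = iter m.+1 f (\sum_(i < k) c i *: iter i f t).
Proof.
elim: n => [|n IH] t r.
  by case=> i [].
move=> [i [Hi Hr]]; rewrite big_ord_recl.
under eq_bigr do rewrite lift0 iterSr.
have [r0|r0] := eqVneq (r 0%N) 0.
  rewrite r0 scale0r add0r => Hs.
  have Hi' : exists i, (i < n)%N /\ r i.+1 != 0.
    case: i Hi Hr => [|i] Hi Hr; first by rewrite r0 eqxx in Hr.
    by exists i.
  have [m [k [c Hc]]] := IH (f t) (fun i => r i.+1) Hi' Hs.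
  exists m.+1, k, c.
  rewrite iterSr Hc [in RHS]iterSr fsum.
  congr (iter m.+1 f _); apply: eq_bigr => j _.
  by rewrite -iterSr iterS.
move=> Hs.
have Hr0 : (r 0%N)^-1 * r 0%N = 1 by rewrite mulVf.
exists 0%N, n, (fun i => - (r 0%N)^-1 * r i.+1).
rewrite /= -[LHS]scale1r -Hr0 -scalerA.
have -> : r 0%N *: t = - \sum_(i < n) r i.+1 *: iter i f (f t).
  by apply/eqP; rewrite -addr_eq0; apply/eqP.
rewrite (fsum _ (fun i => - (r 0%N)^-1 * r i.+1)) scalerN -scaleNr scaler_sumr; apply: eq_bigr => j _.
by rewrite scalerA -iterSr iterS.
Qed.


Definition subsp (W : V -> Prop) := W 0 /\ (forall x y, W x -> W y -> W (x + y)) /\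
  (forall (a : K) x, W x -> W (a *: x)).

Lemma sumW (W : V -> Prop) k (c : nat -> K) (g : nat -> V) : subsp W ->
  (forall i, W (g i)) -> W (\sum_(i < k) c i *: g i).
Proof.
move=> [W0 [WD WZ]] Hg; elim: k => [|k IH]; first by rewrite big_ord0.
by rewrite big_ord_recr /=; apply: WD => //; apply: WZ.
Qed.

Lemma G_fd (W : V -> Prop) (s : seq V)
  (HW : forall x, W x -> exists c : 'I_(size s) -> K, x = \sum_(i < size s) c i *: s`_i)
  (HsW : subsp W) (Hf : forall w, W w -> W (f w)) t (Ht : W t) :
  exists m w, W w /\ iter m f t = iter m.+1 f w.
Proof.
have Hit : forall i, W (iter i f t) by elim=> //= i IH; apply: Hf.
have [r [[i Hi] Hs]] := dep_lemma HW (fun i => Hit i).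
have [||m [k [c Hc]]] := @shiftG (size s).+1 t (fun n => r (inord n)).
- by exists i; rewrite inord_val.
- by rewrite -[RHS]Hs; apply: eq_bigr => j _; rewrite inord_val.
by exists m, (\sum_(i < k) c i *: iter i f t); split => //; exact: (sumW _ _ HsW Hit).
Qed.
End LinAlg.

Section Alg.
Variables (K : fieldType) (V : lmodType K) (mul : V -> V -> V).
Hypothesis HA : assoc_algebra_mul mul.

Lemma mA x y z : mul x (mul y z) = mul (mul x y) z.
Proof. by case: HA. Qed.
Lemma HLl a x y z : mul (a *: x + y) z = a *: mul x z + mul y z.
Proof. by case: HA => _ []. Qed.
Lemma HRr a x y z : mul z (a *: x + y) = a *: mul z x + mul z y.
Proof. by case: HA => _ []. Qed.

Lemma mul0l z : mul 0 z = 0.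
Proof.
have := HLl 1 0 0 z; rewrite !scale1r !addr0 => H.
by apply: (addrI (mul 0 z)); rewrite addr0 -H.
Qed.
Lemma mul0r z : mul z 0 = 0.
Proof.
have := HRr 1 0 0 z; rewrite !scale1r !addr0 => H.
by apply: (addrI (mul z 0)); rewrite addr0 -H.
Qed.
Lemma mulDl x y z : mul (x + y) z = mul x z + mul y z.
Proof. by have := HLl 1 x y z; rewrite !scale1r. Qed.
Lemma mulDr x y z : mul z (x + y) = mul z x + mul z y.
Proof. by have := HRr 1 x y z; rewrite !scale1r. Qed.
Lemma mulZl a x z : mul (a *: x) z = a *: mul x z.
Proof. by have := HLl a x 0 z; rewrite !addr0 mul0l addr0. Qed.
Lemma mulZr a x z : mul z (a *: x) = a *: mul z x.
Proof. by have := HRr a x 0 z; rewrite !addr0 mul0r addr0. Qed.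
Lemma mulNl x z : mul (- x) z = - mul x z.
Proof. by rewrite -scaleN1r mulZl scaleN1r. Qed.
Lemma mulNr x z : mul z (- x) = - mul z x.
Proof. by rewrite -scaleN1r mulZr scaleN1r. Qed.
Lemma mulBl x y z : mul (x - y) z = mul x z - mul y z.
Proof. by rewrite mulDl mulNl. Qed.
Lemma mulBr x y z : mul z (x - y) = mul z x - mul z y.
Proof. by rewrite mulDr mulNr. Qed.

Lemma left_unit : vN_regular mul -> forall F : seq V,
  exists e, mul e e = e /\ forall x, x \in F -> mul e x = x.
Proof.
move=> Hreg; elim=> [|a F [e [He HF]]].
  by exists 0; split => [|x]; [rewrite mul0l|rewrite in_nil].
have [b Hb] := Hreg a.
set f := mul a b.
have Hfa : mul f a = a by [].
pose c := f - mul e f.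
have Hec : mul e c = 0 by rewrite mulBr mA He subrr.
have [c' Hc'] := Hreg c.
set g := mul c c'.
have Hgc : mul g c = c by [].
have Heg : mul e g = 0 by rewrite /g mA Hec mul0l.
have Hgg : mul g g = g by rewrite {2}/g mA Hgc.
pose h := g - mul g e.
have Heh : mul e h = 0 by rewrite mulBr Heg mA Heg mul0l subrr.
have Hhe : mul h e = 0 by rewrite mulBl -mA He subrr.
have Hhh : mul h h = h by rewrite {1}/h mulBl -(mA g e h) Heh mul0r subr0 /h mulBr Hgg mA Hgg.
have Hhc : mul h c = c by rewrite mulBl Hgc -mA Hec mul0r subr0.
clearbody h.
exists (e + h); split.
  by rewrite mulDl !mulDr He Heh Hhe Hhh addr0 add0r.
have He'e : mul (e + h) e = e by rewrite mulDl He Hhe addr0.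
have He'f : mul (e + h) f = f.
  have -> : f = mul e f + c by rewrite /c addrC subrK.
  by rewrite mulDr mA He'e mulDl Hec Hhc add0r.
move=> x; rewrite in_cons => /orP [/eqP ->|Hx].
  by rewrite -{1}Hfa mA He'f.
by rewrite -(HF x Hx) mA He'e.
Qed.

End Alg.

Section Units.
Variables (K : fieldType) (V : lmodType K) (mul : V -> V -> V).
Hypothesis HA : assoc_algebra_mul mul.
Hypothesis Hreg : vN_regular mul.

Lemma right_unit (F : seq V) : exists e, mul e e = e /\ forall x, x \in F -> mul x e = x.
Proof.
have HA' : assoc_algebra_mul (fun x y => mul y x).
  split; first by move=> x y z; rewrite (mA HA).
  by split=> a x y z; [rewrite (HRr HA)|rewrite (HLl HA)].
have Hreg' : vN_regular (fun x y => mul y x).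
  by move=> x; have [y Hy] := Hreg x; exists y; rewrite (mA HA).
exact: (left_unit HA' Hreg').
Qed.

Lemma two_unit (F : seq V) : exists e, mul e e = e /\
  forall x, x \in F -> mul e x = x /\ mul x e = x.
Proof.
have [G [HG HFG]] := right_unit F.
have [E [HE HFE]] := left_unit HA Hreg (G :: F).
have HEG : mul E G = G by apply: HFE; rewrite mem_head.
exists (E + G - mul G E).
have HeE : mul (E + G - mul G E) E = E.
  by rewrite (mulBl HA) (mulDl HA) HE -(mA HA) HE addrK.
have HeG : mul (E + G - mul G E) G = G.
  by rewrite (mulBl HA) (mulDl HA) HEG HG -(mA HA) HEG HG addrK.
split.
  by rewrite (mulBr HA) (mulDr HA) HeE HeG (mA HA) HeG.
move=> x Hx; have xG := HFG x Hx.
have Ex : mul E x = x by apply: HFE; rewrite in_cons Hx orbT.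
split.
  by rewrite (mulBl HA) (mulDl HA) Ex -(mA HA) Ex addrK.
by rewrite (mulBr HA) (mulDr HA) xG (mA HA) xG addrC addKr.
Qed.
End Units.

Section Main.
Variables (K : fieldType) (V : lmodType K) (mul : V -> V -> V).
Hypothesis HA : assoc_algebra_mul mul.
Hypothesis Hreg : vN_regular mul.
Hypothesis HLF : locally_finite_dim mul.
Variables e x : V.
Hypothesis He : mul e e = e.
Hypothesis Hex : mul e x = x.
Hypothesis Hxe : mul x e = x.

Let mA := mA HA.
Let mulDl := mulDl HA.
Let mulDr := mulDr HA.
Let mulBl := mulBl HA.
Let mulBr := mulBr HA.
Let mul0l := mul0l HA.
Let mul0r := mul0r HA.

Definition P n := iter n (fun t => mul t x) e.
Lemma PS n : P n.+1 = mul (P n) x. Proof. by []. Qed.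
Lemma Pcomm n : mul x (P n) = mul (P n) x.
Proof. elim: n => [|n IH]; first by rewrite /P /= Hxe Hex. by rewrite PS mA IH. Qed.
Lemma PSl n : P n.+1 = mul x (P n). Proof. by rewrite Pcomm. Qed.
Lemma eP n : mul e (P n) = P n.
Proof. elim: n => [|n IH]; first by rewrite /P /= He. by rewrite PS mA IH. Qed.
Lemma P1 : P 1 = x. Proof. by rewrite PS /P /= Hex. Qed.
Lemma P0 : P 0 = e. Proof. by []. Qed.
Opaque P.

Lemma subalg_subsp (S : V -> Prop) : is_subalgebra mul S -> subsp S.
Proof. by case=> S0 [SD [SZ _]]. Qed.

Lemma drazin : exists N w, P N = mul w (P N.+1).
Proof.
have [W [HWs [[s [_ HWspan]] HWF]]] := HLF [:: e; x].
have WxW : W x by apply: HWF; rewrite !inE eqxx orbT.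
have WeW : W e by apply: HWF; rewrite !inE eqxx.
pose f := fun t => mul t x.
have hf : forall (a : K) u v, f (a *: u + v) = a *: f u + f v.
  by move=> a u v; rewrite /f HLl.
have Hf : forall w, W w -> W (f w).
  by move=> w Hw; case: HWs => _ [_ [_ HM]]; apply: HM.
have [m [w [_ Hm]]] := @G_fd _ _ f hf W s HWspan (subalg_subsp HWs) Hf e WeW.
have HQ : forall k w, iter k.+1 f w = mul w (P k.+1).
  move=> k w'; elim: k => [|k IH]; first by rewrite P1.
  by rewrite iterS IH /f (PS k.+1) mA.
by exists m, w; rewrite -HQ.
Qed.

Definition Cj j := exists d, forall v, mul x v = 0 -> (exists s, v = mul (P j) s) ->
  (exists s, mul d v = mul (P j) s) /\ (forall t, mul d v = mul (P j.+1) t -> v = 0).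

Lemma chain_base N w : P N = mul w (P N.+1) -> Cj N.
Proof.
move=> HN; exists 0 => v Hxv [s Hs].
have v0 : v = 0 by rewrite Hs HN -mA PSl -mA -Hs Hxv mul0r.
split; last by [].
by exists 0; rewrite mul0l mul0r.
Qed.


Lemma chain_step j : Cj j.+1 -> Cj j.
Proof.
move=> [d1 H1].
have [y2 Hy2] := Hreg (P j.+2).
pose u := P j.+1 - mul (mul (P j.+1) y2) (P j.+2).
have F1 : forall w, mul u w = mul (P j.+1) (w - mul y2 (mul (P j.+2) w)).
  by move=> w; rewrite mulBl mulBr !mA.
have F2 : mul x u = 0.
  by rewrite mulBr (mA x (mul (P j.+1) y2)) (mA x (P j.+1) y2) -PSl Hy2 subrr.
have [u' Hu'] := Hreg u.
pose h := mul u u'.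
have F3 : forall v, mul x (mul h v) = 0 /\ exists s, mul h v = mul (P j.+1) s.
  move=> v; split; first by rewrite /h !mA F2 !mul0l.
  by eexists; rewrite /h -mA F1.
have F4 : forall w, mul x w = 0 -> (exists s, w = mul (P j.+1) s) -> mul h w = w.
  move=> w Hw [s Hs].
  have Hs2 : mul (P j.+2) s = 0 by rewrite PSl -mA -Hs.
  have Hus : mul u s = w by rewrite F1 Hs2 mul0r subr0.
  by rewrite -Hus /h mA Hu'.
clearbody h.
have [y1 Hy1] := Hreg (P j.+1).
exists (mul (mul (P j) y1) (mul d1 h) + e - h) => v Hxv [s0 Hs0].
have Hev : mul e v = v by rewrite Hs0 mA eP.
have [Hxh [s1 Hs1]] := F3 v.
have [[s2 Hs2] H1b] := H1 (mul h v) Hxh (ex_intro _ s1 Hs1).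
have Hdv : mul (mul (mul (P j) y1) (mul d1 h) + e - h) v =
    mul (P j) (mul y1 (mul d1 (mul h v))) + v - mul h v.
  by rewrite mulBl mulDl Hev !mA.
split.
  exists (mul y1 (mul d1 (mul h v)) + s0 - mul x s1).
  by rewrite Hdv mulBr mulDr -Hs0; congr (_ - _); rewrite Hs1 PS mA.
move=> t Ht.
have Hx1 : mul x (mul (mul (mul (P j) y1) (mul d1 h) + e - h) v) = mul d1 (mul h v).
  rewrite Hdv mulBr mulDr Hxv Hxh addr0 subr0 mA -PSl Hs2. by rewrite (mA (P j.+1) y1) mA Hy1.
have Hhv : mul h v = 0.
  by apply: H1b; rewrite -Hx1 Ht mA -PSl.
move: Ht; rewrite Hdv Hhv !mul0r add0r subr0 => Ht.
by rewrite -(F4 v Hxv (ex_intro _ t Ht)).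
Qed.

Lemma chain0 : Cj 0.
Proof.
have [N [w Hw]] := drazin.
suff H : forall i, (i <= N)%N -> Cj (N - i) by have := H N (leqnn N); rewrite subnn.
elim=> [|i IH] Hi; first by rewrite subn0; exact: chain_base Hw.
apply: chain_step; have -> : ((N - i.+1).+1 = N - i)%N by rewrite subnSK.
by apply: IH; apply: ltnW.
Qed.


Lemma unit_elem : exists u v, (mul e u = u /\ mul u e = u) /\ (mul e v = v /\ mul v e = v) /\
  mul u v = e /\ mul v u = e /\ mul (mul x u) x = x.
Proof.
have [d0 Hd0] := chain0.
have [y1 Hy1] := Hreg x.
pose y := mul (mul e y1) e.
have Hye : mul y e = y by rewrite /y -mA He.
have Hey : mul e y = y by rewrite /y !mA He.
have Hxyx : mul (mul x y) x = x.
  rewrite (mA x (mul e y1) e) (mA x e y1) Hxe -(mA (mul x y1) e x) Hex.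
  by [].
clearbody y.
pose p := mul x y; pose q := mul y x.
have Hpx : mul p x = x by [].
have Hpp : mul p p = p by rewrite {2}/p mA Hpx.
have Hep : mul e p = p by rewrite /p mA Hex.
have Hpe : mul p e = p by rewrite /p -mA Hye.
have Hqq : mul q q = q by rewrite /q -mA (mA x y x) Hxyx.
have Heq : mul e q = q by rewrite /q mA Hey.
have Hqe : mul q e = q by rewrite /q -mA Hxe.
have Hxq : mul x q = x by rewrite /q mA Hxyx.
have Hqw : forall w, mul x w = 0 -> mul q w = 0 by move=> w Hw; rewrite /q -mA Hw mul0r.
have Hpdef : forall z, mul x (mul y z) = mul p z by move=> z; rewrite /p mA.
clearbody p q.
pose D := mul (mul (e - p) d0) (e - q).
have HeD : mul e D = D.
  by rewrite /D (mA e (mul (e - p) d0) (e - q)) (mA e (e - p) d0) (mulBr e p e) He Hep.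
have HDe : mul D e = D by rewrite /D -(mA (mul (e - p) d0) (e - q) e) (mulBl e q e) Hqe He.
have HpD : mul p D = 0 by rewrite /D (mA p (mul (e - p) d0) (e - q)) (mA p (e - p) d0) (mulBr e p p) Hpe Hpp subrr !mul0l.
have HDq : mul D q = 0 by rewrite /D -(mA (mul (e - p) d0) (e - q) q) (mulBl e q q) Hqq Heq subrr mul0r.
have HDw' : forall w, mul e w = w -> mul x w = 0 -> mul D w = mul (e - p) (mul d0 w).
  move=> w Hw Hxw; rewrite /D -(mA (mul (e - p) d0) (e - q) w) (mulBl e q w) Hw Hqw // subr0.
  by rewrite mA.
clearbody D.
pose a := x + D.
have Hea : mul e a = a by rewrite /a mulDr Hex HeD.
have Hae : mul a e = a by rewrite /a mulDl Hxe HDe.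
have Haq : mul a q = x by rewrite /a mulDl Hxq HDq addr0.
have Hinj : forall w, mul e w = w -> mul a w = 0 -> w = 0.
  move=> w Hw Haw.
  have Hxw : mul x w = 0.
    have := congr1 (mul p) Haw; rewrite mul0r /a mulDl mulDr !mA Hpx HpD mul0l addr0.
    by [].
  have HDw : mul D w = 0 by move: Haw; rewrite /a mulDl Hxw add0r.
  have [[s Hs] Hd0b] := Hd0 w Hxw (ex_intro _ w (esym (etrans (congr1 (mul^~ w) P0) Hw))).
  apply: (Hd0b (mul y (mul d0 w))).
  have Hz : mul e (mul d0 w) = mul d0 w by rewrite Hs P0 mA He.
  have : mul (e - p) (mul d0 w) = 0 by rewrite -HDw' // HDw.
  rewrite mulBl Hz => /eqP; rewrite subr_eq0 => /eqP Hz2.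
  by rewrite P1 Hpdef -Hz2.
have [W [HWs [[s [_ HWspan]] HWF]]] := HLF [:: e; a].
have WaW : W a by apply: HWF; rewrite !inE eqxx orbT.
have WeW : W e by apply: HWF; rewrite !inE eqxx.
have [W0 [WD [WZ WM]]] := HWs.
pose f := fun w => mul a w + (w - mul e w).
have hf : forall (c : K) u v, f (c *: u + v) = c *: f u + f v.
  move=> c u v; rewrite /f (HRr HA) (HRr HA) opprD [c *: u + v + _]addrACA -scalerBr.
  by rewrite addrACA -scalerDr.
have Hf : forall w, W w -> W (f w).
  move=> w Hw; rewrite /f -scaleN1r; exact: (WD _ _ (WM _ _ WaW Hw) (WD _ _ Hw (WZ _ _ (WM _ _ WeW Hw)))).
have Hef : forall w, mul e (f w) = mul a w.
  by move=> w; rewrite /f mulDr mulBr !mA Hea He subrr addr0.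
have finj : forall w, f w = 0 -> w = 0.
  move=> w Hfw.
  have Haw : mul a w = 0 by rewrite -Hef Hfw mul0r.
  have Hew : mul e w = 0.
    by apply: Hinj; [rewrite mA He | rewrite mA Hae].
  by move: Hfw; rewrite /f Haw Hew add0r subr0.
have itinj : forall m z, iter m f z = 0 -> z = 0.
  elim=> [|m IH] z //= Hz; apply: finj; apply: IH; by rewrite -iterSr.
have [m [w [Ww Hm]]] := @G_fd _ _ f hf W s HWspan (subalg_subsp HWs) Hf e WeW.
have Hfw : f w = e.
  apply/eqP; rewrite eq_sym -subr_eq0; apply/eqP; apply: (itinj m).
  by rewrite (iterB hf) Hm iterSr subrr.
have Haw : mul a w = e by rewrite -Hef Hfw He.
pose b := mul (mul e w) e.
have Hab : mul a b = e by rewrite /b (mA a (mul e w) e) (mA a e w) Hae Haw He.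
have Heb : mul e b = b by rewrite /b !mA He.
have Hbe : mul b e = b by rewrite /b -mA He.
have Hba : mul b a = e.
  apply/eqP; rewrite -subr_eq0; apply/eqP; apply: Hinj.
    by rewrite mulBr He mA Heb.
  by rewrite mulBr mA Hab Hea Hae subrr.
exists b, a; do ! split => //.
rewrite -[in LHS]Haq -(mA (mul a q) b (mul a q)) (mA b a q) Hba Heq.
by rewrite -mA Hqq.
Qed.

End Main.

Theorem proposition5p5 (K : fieldType) (V : lmodType K) (mul : V -> V -> V) :
  assoc_algebra_mul mul -> vN_regular mul -> locally_finite_dim mul ->
  locally_unit_regular mul.
Proof.
move=> HA Hreg HLF F.
have [e [He HF]] := two_unit HA Hreg F.
exists (fun v => mul e v = v /\ mul v e = v); split; [|split].
- split; first by rewrite (mul0r HA) (mul0l HA).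
  split; first by move=> u v [Hu1 Hu2] [Hv1 Hv2]; rewrite (mulDr HA) (mulDl HA) Hu1 Hu2 Hv1 Hv2.
  split; first by move=> c u [Hu1 Hu2]; rewrite (mulZr HA) (mulZl HA) Hu1 Hu2.
  move=> u v [Hu1 Hu2] [Hv1 Hv2]; split; first by rewrite (mA HA) Hu1.
  by rewrite -(mA HA) Hv2.
- by move=> x Hx; apply: HF.
exists e; split; first by [].
split; first by move=> x [].
move=> x [Hex Hxe].
exact: (unit_elem HA Hreg HLF He Hex Hxe).
Qed.
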